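(* Let $\Omega\subset\mathbb{R}^2$ be a bounded polygonal domain, $X=H^2_0(\Omega)$, $Re>0$, $Ro>0$, $F\in H^{-2}(\Omega)$, and let $X^h\subset X$ be a conforming finite element space on a triangulation of $\Omega$. Let $\psi^h\in X^h$ satisfy $$Re^{-1}\int_\Omega \Delta\psi^h\,\Delta\chi^h\,d\mathbf{x}+\int_\Omega \Delta\psi^h\,(\psi^h_y\chi^h_x-\psi^h_x\chi^h_y)\,d\mathbf{x}-Ro^{-1}\int_\Omega \psi^h_x\,\chi^h\,d\mathbf{x}=Ro^{-1}\int_\Omega F\chi^h\,d\mathbf{x}\qquad\forall\chi^h\in X^h.$$ Then $|\psi^h|_2\le Re\,Ro^{-1}\,\|F\|_{-2}$.
   Context: $H^2_0(\Omega)=\{\psi\in H^2(\Omega):\psi=\partial\psi/\partial\mathbf{n}=0\text{ on }\partial\Omega\}$. $|\chi|_2$ denotes the $H^2$-seminorm, equal to $\|\Delta\chi\|_{L^2}$ on $H^2_0(\Omega)$, and $\|F\|_{-2}=\sup_{0\ne\chi\in H^2_0(\Omega)}|\int_\Omega F\chi|/|\chi|_2$. Subscripts $x,y$ denote partial derivatives. *)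

(* Defs.v *)
From HB Require Import structures.
From mathcomp Require Import all_boot all_order all_algebra.
From mathcomp Require Import all_classical all_reals all_analysis.
Set Implicit Arguments. Unset Strict Implicit. Unset Printing Implicit Defensive.
Import Order.TTheory GRing.Theory Num.Theory.
Import numFieldNormedType.Exports.
Local Open Scope classical_set_scope.
Local Open Scope ring_scope.

Section Sobolev.
Variable R : realType.

Definition leb2 := (@lebesgue_measure R \x @lebesgue_measure R)%E.

Definition integ (D : set (R * R)) (f : R * R -> R) : R := Rintegral leb2 D f.

Definition pdx (f : R * R -> R) : R * R -> R :=
  fun p => derive1 (fun t => f (t, p.2)) p.1.
Definition pdy (f : R * R -> R) : R * R -> R :=
  fun p => derive1 (fun t => f (p.1, t)) p.2.

Fixpoint diter (s : seq bool) (f : R * R -> R) : R * R -> R :=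
  match s with
  | [::] => f
  | b :: s' => (if b then pdx else pdy) (diter s' f)
  end.

Definition smooth (f : R * R -> R) : Prop :=
  forall s : seq bool, continuous (diter s f) /\
    forall p : R * R,
      derivable (fun t => diter s f (t, p.2)) p.1 1 /\
      derivable (fun t => diter s f (p.1, t)) p.2 1.

Definition test_fun (Om : set (R * R)) (f : R * R -> R) : Prop :=
  smooth f /\ exists K : set (R * R),
    compact K /\ K `<=` Om /\ forall p, ~ K p -> f p = 0.

Definition L2 (Om : set (R * R)) (g : R * R -> R) : Prop :=
  measurable_fun Om g /\ leb2.-integrable Om (fun p => ((g p) ^+ 2)%:E).

Definition weak_deriv (Om : set (R * R)) (s : seq bool)
    (psi g : R * R -> R) : Prop :=
  L2 Om g /\ forall phi, test_fun Om phi ->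
    integ Om (fun p => psi p * diter s phi p)
    = (-1) ^+ size s * integ Om (fun p => g p * phi p).

(** The multi-indices of order <= 2: 1, x, y, xx, xy, yy. *)
Definition ord2 : seq (seq bool) :=
  [:: [::]; [:: true]; [:: false]; [:: true; true]; [:: true; false];
      [:: false; false]].

Definition H2 (Om : set (R * R)) (psi : R * R -> R) : Prop :=
  L2 Om psi /\ forall s, s \in ord2 -> exists g, weak_deriv Om s psi g.

(** The (chosen representative of the) weak derivative D^s psi. *)
Definition wder (Om : set (R * R)) (s : seq bool) (psi : R * R -> R)
  : R * R -> R := get [set g | weak_deriv Om s psi g].

Definition H20 (Om : set (R * R)) (psi : R * R -> R) : Prop :=
  H2 Om psi /\ exists phi : nat -> R * R -> R,
    (forall n, test_fun Om (phi n)) /\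
    (fun n => \sum_(s <- ord2)
        integ Om (fun p => (diter s (phi n) p - wder Om s psi p) ^+ 2))
      @ \oo --> (0 : R).

Definition wdx Om psi := wder Om [:: true] psi.
Definition wdy Om psi := wder Om [:: false] psi.
Definition wlap Om psi : R * R -> R :=
  fun p => wder Om [:: true; true] psi p + wder Om [:: false; false] psi p.

(** |chi|_2 = || Delta chi ||_{L^2} (the H^2 seminorm on H^2_0). *)
Definition semi2 (Om : set (R * R)) (chi : R * R -> R) : R :=
  Num.sqrt (integ Om (fun p => (wlap Om chi p) ^+ 2)).

Definition Hm2 (Om : set (R * R)) (F : (R * R -> R) -> R) : Prop :=
  (forall (a : R) chi1 chi2, H20 Om chi1 -> H20 Om chi2 ->
     F (fun p => a * chi1 p + chi2 p) = a * F chi1 + F chi2) /\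
  exists C : R, forall chi, H20 Om chi -> `|F chi| <= C * semi2 Om chi.

Definition dualnorm (Om : set (R * R)) (F : (R * R -> R) -> R) : R :=
  sup [set `|F chi| / semi2 Om chi | chi in [set chi | H20 Om chi /\ chi <> (fun=> 0)]].

Definition segment (a b : R * R) : set (R * R) :=
  [set p | exists t : R, 0 <= t <= 1 /\
     p = ((1 - t) * a.1 + t * b.1, (1 - t) * a.2 + t * b.2)].

Definition polygonal_domain (Om : set (R * R)) : Prop :=
  open Om /\ connected Om /\ Om !=set0 /\ bounded_set Om /\
  exists segs : seq ((R * R) * (R * R)),
    closure Om `\` Om = \bigcup_(e in [set` segs]) segment e.1 e.2.

Definition triangle (a b c : R * R) : set (R * R) :=
  [set p | exists l1 l2 l3 : R, 0 <= l1 /\ 0 <= l2 /\ 0 <= l3 /\ l1 + l2 + l3 = 1 /\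
     p = (l1 * a.1 + l2 * b.1 + l3 * c.1, l1 * a.2 + l2 * b.2 + l3 * c.2)].

Definition nondegenerate (a b c : R * R) : Prop :=
  (b.1 - a.1) * (c.2 - a.2) - (b.2 - a.2) * (c.1 - a.1) != 0.

Definition tri_set (T : (R * R) * (R * R) * (R * R)) : set (R * R) :=
  triangle T.1.1 T.1.2 T.2.

Definition vertices (T : (R * R) * (R * R) * (R * R)) : seq (R * R) :=
  [:: T.1.1; T.1.2; T.2].

Definition triangulation (Om : set (R * R))
    (Th : seq ((R * R) * (R * R) * (R * R))) : Prop :=
  (forall T, T \in Th -> nondegenerate T.1.1 T.1.2 T.2) /\
  closure Om = \bigcup_(T in [set` Th]) tri_set T /\
  (forall i j, (i < size Th)%N -> (j < size Th)%N -> i <> j ->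
     let T1 := nth (0, 0, 0) Th i in let T2 := nth (0, 0, 0) Th j in
     (tri_set T1)° `&` (tri_set T2)° = set0 /\
     (tri_set T1 `&` tri_set T2 = set0 \/
      (exists v, v \in vertices T1 /\ v \in vertices T2 /\
          tri_set T1 `&` tri_set T2 = [set v]) \/
      (exists v w, v <> w /\ v \in vertices T1 /\ v \in vertices T2 /\
          w \in vertices T1 /\ w \in vertices T2 /\
          tri_set T1 `&` tri_set T2 = segment v w))).

Definition poly2 (k : nat) (f : R * R -> R) : Prop :=
  exists c : nat -> nat -> R, forall p,
    f p = \sum_(i < k.+1) \sum_(j < k.+1) c i j * p.1 ^+ i * p.2 ^+ j.

Definition conforming_fe_space (Om : set (R * R))
    (Th : seq ((R * R) * (R * R) * (R * R))) (Xh : set (R * R -> R)) : Prop :=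
  (exists basis : seq (R * R -> R),
     Xh = [set f | exists c : nat -> R,
             f = (fun p => \sum_(i < size basis) c i * nth (fun=> 0) basis i p)]) /\
  (exists k : nat, forall f, Xh f -> forall T, T \in Th ->
     exists q, poly2 k q /\ forall p, tri_set T p -> f p = q p) /\
  Xh `<=` H20 Om.

End Sobolev.

(* Main.v *)
Require Import Defs.
From HB Require Import structures.
From mathcomp Require Import all_boot all_order all_algebra.
From mathcomp Require Import all_classical all_reals all_analysis measurable_realfun.
From mathcomp Require Import ring lra.
Import Order.TTheory GRing.Theory Num.Theory.
Import numFieldNormedType.Exports.
Local Open Scope classical_set_scope.
Local Open Scope ring_scope.
Section S.
Variable R : realType.
Definition rect (a b c d : rat) : set (R * R) :=
  `]ratr a, ratr b[ `*` `]ratr c, ratr d[.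

Lemma open_meas (U : set (R*R)) : open U -> measurable U.
Proof.
move=> oU.
have -> : U = \bigcup_a \bigcup_b \bigcup_c \bigcup_d
   (if pselect (rect a b c d `<=` U) is left _ then rect a b c d else set0).
  apply/seteqP; split; last first.
    by move=> x [a _ [b _ [c _ [d _]]]]; case: pselect => // H /H.
  move=> x Ux; have /nbhs_ballP [e /= e0 exU] := oU x Ux.
  have [a /andP[ha1 ha2]] : exists a : rat, x.1 - e < ratr a < x.1.
    by have [q] := @rat_in_itvoo R (x.1 - e) x.1 ltac:(by rewrite ltrBlDr ltrDl); rewrite in_itv /=; exists q.
  have [b /andP[hb1 hb2]] : exists a : rat, x.1 < ratr a < x.1 + e.
    by have [q] := @rat_in_itvoo R x.1 (x.1 + e) ltac:(by rewrite ltrDl); rewrite in_itv /=; exists q.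
  have [c /andP[hc1 hc2]] : exists a : rat, x.2 - e < ratr a < x.2.
    by have [q] := @rat_in_itvoo R (x.2 - e) x.2 ltac:(by rewrite ltrBlDr ltrDl); rewrite in_itv /=; exists q.
  have [d /andP[hd1 hd2]] : exists a : rat, x.2 < ratr a < x.2 + e.
    by have [q] := @rat_in_itvoo R x.2 (x.2 + e) ltac:(by rewrite ltrDl); rewrite in_itv /=; exists q.
  exists a => //; exists b => //; exists c => //; exists d => //.
  case: pselect => [_|]; last first.
    case; move=> [y1 y2] [] /=; rewrite !in_itv /= => /andP[h1 h2] /andP[h3 h4].
    apply: exU; rewrite /ball /= /prod_ball /ball /=; split.
      rewrite ltr_norml; apply/andP; split; rewrite ?ltrBrDl; lra.
    rewrite ltr_norml; apply/andP; split; rewrite ?ltrBrDl; lra.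
  by rewrite /rect /= !in_itv /= ha2 hb1 hc2 hd1.
apply: bigcupT_measurable_rat => a; apply: bigcupT_measurable_rat => b.
apply: bigcupT_measurable_rat => c; apply: bigcupT_measurable_rat => d.
case: pselect => _; last exact: measurable0.
by apply: measurableX; exact: measurable_itv.
Qed.

Lemma fin_Om (Om : set (R*R)) : open Om -> bounded_set Om -> (leb2 Om < +oo)%E.
Proof.
move=> oOm [M [Mr hM]].
have {hM} [N hM] : exists N : R, forall x, Om x -> `|x| <= N.
  by exists (`|M| + 1); apply: hM; rewrite (le_lt_trans (ler_norm M)) // ltrDl.
have sub : Om `<=` `[-N, N] `*` `[-N, N].
  move=> x Ox; have := hM x Ox; rewrite /Num.norm /= ge_max => /andP[h1 h2].
  by split; rewrite in_itv /= -ler_norml.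
have := @le_measure _ _ _ (@leb2 R) Om (`[-N, N] `*` `[-N, N]).
move=> /(_ _ _ sub) h; apply: (le_lt_trans (h _ _)).
- by rewrite inE; exact: open_meas.
- by rewrite inE; apply: measurableX; exact: measurable_itv.
have E := @product_measure1E _ _ _ _ R lebesgue_measure lebesgue_measure `[(-N)%R, N]%classic `[(-N)%R, N]%classic (measurable_itv _) (measurable_itv _).
apply: (@le_lt_trans _ _ (lebesgue_measure `[(-N)%R, N]%classic * lebesgue_measure `[(-N)%R, N]%classic)%E).
  by rewrite -E; exact: lexx.
by rewrite lebesgue_measure_itv /= lte_fin; case: ifPn => _; rewrite -?EFinM ?ltry //= mul0e ltry.
Qed.

Definition LT := (g_sigma_algebraType (R.-ocitv.-measurable) * g_sigma_algebraType (R.-ocitv.-measurable))%type.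
Lemma open_measL (U : set (R*R)) : open U -> measurable (U : set LT).
Proof. exact: open_meas. Qed.
Arguments open_measL {U}.

Lemma cont_meas (D : set (R*R)) (f : R*R -> R) : open D -> continuous f ->
  measurable_fun D f.
Proof.
move=> oD /continuousP cf; apply: (measurability _ (RGenOpens.measurableE R)).
move=> _ [_ [a [b ->] <-]]; apply: open_meas; apply: openI => //.
exact/cf/interval_open.
Qed.

Arguments cont_meas {D f}.
Arguments fin_Om {Om}.

Lemma ineq_mul (a b : R) : `|a * b| <= a ^+ 2 + b ^+ 2.
Proof.
rewrite normrM -(real_normK (num_real a)) -(real_normK (num_real b)).
have := normr_ge0 a; have := normr_ge0 b; nra.
Qed.

Lemma L2_mul {Om : set (R*R)} {f g : R*R -> R} : open Om -> L2 Om f -> L2 Om g ->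
  (@leb2 R).-integrable Om (EFin \o (fun p => f p * g p)).
Proof.
move=> /open_measL mOm [mf If] [mg Ig].
apply: (le_integrable mOm (g := fun x => (f x ^+ 2)%:E + (g x ^+ 2)%:E)%E).
- by apply/measurable_EFinP; exact: measurable_funM.
- move=> x _ /=; rewrite lee_fin.
  by rewrite (le_trans (ineq_mul _ _)) // ger0_norm // addr_ge0 // sqr_ge0.
- exact: integrableD.
Qed.

Lemma L2_sub {Om : set (R*R)} {f g : R*R -> R} : open Om -> L2 Om f -> L2 Om g ->
  L2 Om (fun p => f p - g p).
Proof.
move=> oOm [mf If] [mg Ig]; have mOm := open_measL oOm.
split; first exact: measurable_funB.
apply: (le_integrable mOm (g := fun x => (2:R)%:E * (f x ^+ 2)%:E + (2:R)%:E * (g x ^+ 2)%:E)%E).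
- apply/measurable_EFinP; exact/measurable_funX/measurable_funB.
- move=> x _ /=; rewrite lee_fin.
  rewrite ger0_norm ?sqr_ge0 // ger0_norm; last by rewrite addr_ge0 // mulr_ge0 // sqr_ge0.
  have := sqr_ge0 (f x + g x); nra.
- by apply: integrableD => //; apply: integrableZl.
Qed.

Lemma ab_ineq (a b e : R) : 0 <= a -> 0 <= b -> 0 < e ->
  a * b <= e * a ^+ 2 + e^-1 * b ^+ 2.
Proof.
move=> a0 b0 e0; have ei0 : 0 < e^-1 by rewrite invr_gt0.
have id : e * a ^+ 2 + e^-1 * b ^+ 2 - a * b = e^-1 * (e * a - b) ^+ 2 + a * b.
  by field; rewrite gt_eqF.
rewrite -subr_ge0 id; apply: addr_ge0; first exact: mulr_ge0 (ltW ei0) (sqr_ge0 _).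
exact: mulr_ge0.
Qed.

Lemma L2_bound {Om : set (R*R)} {f g : R*R -> R} {e : R} : open Om -> L2 Om f -> L2 Om g -> 0 < e ->
  `|integ Om (fun p => f p * g p)| <=
     e * integ Om (fun p => f p ^+ 2) + e^-1 * integ Om (fun p => g p ^+ 2).
Proof.
move=> oOm Lf Lg e0; have mOm := open_measL oOm.
have [mf If] := Lf; have [mg Ig] := Lg.
have Ifg := L2_mul oOm Lf Lg.
rewrite /integ; apply: le_trans (le_normr_Rintegral mOm Ifg) _.
rewrite -RintegralZl // -[X in _ + X]RintegralZl // -RintegralD //; first last.
- by apply: (eq_integrable mOm _ _ _ (integrableZl mOm e^-1 Ig)) => x _ /=; rewrite EFinM.
- by apply: (eq_integrable mOm _ _ _ (integrableZl mOm e If)) => x _ /=; rewrite EFinM.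
apply: le_Rintegral => //.
- exact: integrable_norm.
- apply: (eq_integrable mOm _ _ _ (integrableD mOm (integrableZl mOm e If) (integrableZl mOm e^-1 Ig))).
  by move=> x _ /=; rewrite EFinD !EFinM.
move=> x _; rewrite normrM -(real_normK (num_real (f x))) -(real_normK (num_real (g x))).
have ei0 : 0 < e^-1 by rewrite invr_gt0.
have eei : e * e^-1 = 1 by rewrite mulfV // gt_eqF.
by apply: ab_ineq.
Qed.

Lemma L2_cvg (Om : set (R*R)) (f h : R*R -> R) (u : nat -> R*R -> R) :
  open Om -> L2 Om f -> L2 Om h -> (forall n, L2 Om (u n)) ->
  (fun n => integ Om (fun p => (u n p - h p) ^+ 2)) @ \oo --> (0:R) ->
  (fun n => integ Om (fun p => f p * u n p)) @ \oo --> integ Om (fun p => f p * h p).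
Proof.
move=> oOm Lf Lh Lu Bc; have mOm := open_measL oOm.
set A := integ Om (fun p => f p ^+ 2).
have A0 : 0 <= A by apply: Rintegral_ge0 => x _; exact: sqr_ge0.
apply/(@cvgrPdist_lt _ R _ \oo _) => d d0.
set ep := d / (2 * (A + 1)).
have ep0 : 0 < ep by rewrite divr_gt0 // mulr_gt0 // ltr_wpDl.
have := (cvgrPdist_lt _ _).1 Bc (ep * d / 2) ltac:(by rewrite divr_gt0 // mulr_gt0).
move=> hBn; near=> n.
have : `|0 - integ Om (fun p => (u n p - h p) ^+ 2)| < ep * d / 2.
  by near: n; exact: hBn.
rewrite sub0r normrN => hB.
have E : integ Om (fun p => f p * (u n p - h p)) =
    integ Om (fun p => f p * u n p) - integ Om (fun p => f p * h p).
  rewrite /integ -RintegralB //; [|exact: L2_mul|exact: L2_mul].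
  by apply: eq_Rintegral => x _; rewrite mulrBr.
have HB := L2_bound oOm Lf (L2_sub oOm (Lu n) Lh) ep0.
rewrite distrC -E; apply: le_lt_trans HB _.
have B0 : 0 <= integ Om (fun p => (u n p - h p) ^+ 2).
  by apply: Rintegral_ge0 => x _; exact: sqr_ge0.
rewrite ger0_norm // in hB.
have h1 : ep * A < d / 2.
  rewrite /ep mulrAC ltr_pdivrMr ?mulr_gt0 ?ltr_wpDl //.
  by rewrite mulrA divfK // ltr_pM2l // ltrDl.
have h2 : ep^-1 * integ Om (fun p => (u n p - h p) ^+ 2) < d / 2.
  by rewrite -(ltr_pM2l ep0) mulrA mulfV ?gt_eqF // mul1r mulrA.
by rewrite [d](splitr d) ltrD.
Unshelve. all: by end_near.
Qed.

Lemma diter_cat (s t : seq bool) (f : R*R -> R) :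
  diter s (diter t f) = diter (s ++ t) f.
Proof. by elim: s => //= b s ->. Qed.

Lemma test_pdx (Om : set (R*R)) (phi : R*R -> R) :
  test_fun Om phi -> test_fun Om (pdx phi).
Proof.
move=> [sm [K [cK [KOm Kz]]]]; split.
  by move=> s; rewrite (diter_cat s [:: true]); exact: sm.
exists K; split => //; split => // p Kp.
have oK : open (~` K) by apply: closed_openC; exact: compact_closed (@norm_hausdorff _ _) cK.
have /nbhs_ballP [e /= e0 peK] := oK p Kp.
have H : \forall t \near p.1, phi (t, p.2) = cst 0 t.
  apply/nbhs_ballP; exists e => // t pt; apply: Kz; apply: peK.
  by split => //=; exact: ballxx.
by rewrite /pdx derive1E (near_eq_derive _ H) derive_cst.
Qed.

Lemma integrable_bounded d (T : measurableType d) (mu : {measure set T -> \bar R})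
  (D : set T) (h : T -> R) (N : R) : measurable D -> (mu D < +oo)%E ->
  measurable_fun D h -> (forall x, `|h x| <= N) -> mu.-integrable D (EFin \o h).
Proof.
move=> mD muD mh hN.
have N0 : 0 <= N by apply: le_trans (hN point) ; exact: normr_ge0.
apply: (le_integrable mD (g := EFin \o cst N)).
- exact/measurable_EFinP.
- by move=> x _ /=; rewrite lee_fin (ger0_norm N0).
apply/integrableP; split; first exact/measurable_EFinP/measurable_cst.
rewrite (eq_integral (cst (EFin N))); last first.
  by move=> x _ /=; rewrite ger0_norm.
rewrite integral_cst //.
by move: muD; rewrite -ge0_fin_numE // => /fineK <-; rewrite -EFinM ltry.
Qed.

Lemma test_L2 (Om : set (R*R)) (phi : R*R -> R) :
  open Om -> bounded_set Om -> test_fun Om phi -> L2 Om phi.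
Proof.
move=> oOm bOm [sm [K [cK [KOm Kz]]]]; have mOm := open_measL oOm.
have cphi : continuous phi := (sm [::]).1.
have mphi : measurable_fun Om phi := cont_meas oOm cphi.
have [N [N0 hN]] : exists N : R, 0 <= N /\ forall x, `|phi x| <= N.
  have := compact_bounded (continuous_compact (continuous_subspaceT cphi) cK).
  move=> [M [_ hM]]; exists (`|M| + 1); split; first by rewrite addr_ge0.
  move=> x; have [Kx|Kx] := pselect (K x); last by rewrite Kz // normr0 addr_ge0.
  by apply: (hM (`|M| + 1)); [rewrite (le_lt_trans (ler_norm M)) // ltrDl|exists x].
split => //.
apply: (@integrable_bounded _ _ _ _ _ (N ^+ 2) mOm (fin_Om oOm bOm) (measurable_funX 2 mphi)).
move=> x; rewrite ger0_norm ?sqr_ge0 //.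
by rewrite -(real_normK (num_real (phi x))) lerXn2r // ?nnegrE.
Qed.
End S.

Arguments test_L2 {R Om phi}.
Arguments test_pdx {R Om phi}.
Arguments L2_cvg {R Om f h u}.
Arguments open_measL {R U}.

Theorem theorem3p1 (R : realType) (Om : set (R * R))
  (Th : seq ((R * R) * (R * R) * (R * R))) (Xh : set (R * R -> R))
  (Re Ro : R) (F : (R * R -> R) -> R) (psih : R * R -> R) :
  polygonal_domain Om ->
  0 < Re -> 0 < Ro ->
  Hm2 Om F ->
  triangulation Om Th ->
  conforming_fe_space Om Th Xh ->
  Xh psih ->
  (forall chih, Xh chih ->
     Re^-1 * integ Om (fun p => wlap Om psih p * wlap Om chih p)
     + integ Om (fun p => wlap Om psih p *
                   (wdy Om psih p * wdx Om chih p - wdx Om psih p * wdy Om chih p))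
     - Ro^-1 * integ Om (fun p => wdx Om psih p * chih p)
     = Ro^-1 * F chih) ->
  semi2 Om psih <= Re * Ro^-1 * dualnorm Om F.
Proof.
move=> [oOm [_ [_ [bOm _]]]] Re0 Ro0 [Flin [C FC]] _ [_ [_ XhH]] Xpsi Eq.
have mOm := open_measL oOm.
have Hpsi := XhH _ Xpsi.
have [[Lpsi Hder] [phi [tphi cphi]]] := Hpsi.
have W0 : weak_deriv Om [::] psih (wder Om [::] psih) := getPex (Hder [::] isT).
have W1 : weak_deriv Om [:: true] psih (wdx Om psih) := getPex (Hder [:: true] isT).
set g0 := wder Om [::] psih in W0 *.
set g1 := wdx Om psih in W1 *.
have [Lg0 W0'] := W0; have [Lg1 W1'] := W1.
have Lphi n : L2 Om (phi n) := test_L2 oOm bOm (tphi n).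
have Ldphi n : L2 Om (pdx (phi n)) := test_L2 oOm bOm (test_pdx (tphi n)).
have I0 s n : 0 <= integ Om (fun p => (diter s (phi n) p - wder Om s psih p) ^+ 2).
  by apply: Rintegral_ge0 => x _; exact: sqr_ge0.
have Sle s n : s \in ord2 -> integ Om (fun p => (diter s (phi n) p - wder Om s psih p) ^+ 2) <=
    \sum_(s <- ord2) integ Om (fun p => (diter s (phi n) p - wder Om s psih p) ^+ 2).
  move=> sin; rewrite (big_rem s sin) /= lerDl; apply: sumr_ge0 => t _; exact: I0.
have sq s : s \in ord2 ->
    (fun n => integ Om (fun p => (diter s (phi n) p - wder Om s psih p) ^+ 2)) @ \oo --> (0:R).
  move=> sin; apply: (@squeeze_cvgr _ _ _ _ (fun=> 0) _ _ _ _ _ cphi); last exact: cvg_cst.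
  by near=> n; rewrite I0 Sle.
have t0 := sq [::] isT.
have t1 := sq [:: true] isT.
have aP := L2_cvg oOm Lpsi Lg1 Ldphi t1.
have bQ := L2_cvg oOm Lg1 Lg0 Lphi t0.
have cS := L2_cvg oOm Lg0 Lg1 Ldphi t1.
have ab : (fun n => integ Om (fun p => psih p * pdx (phi n) p)) =
    (fun n => - integ Om (fun p => g1 p * phi n p)).
  by apply: funext => n; rewrite (W1' (phi n) (tphi n)) /= expr1 mulN1r.
have ac : (fun n => integ Om (fun p => psih p * pdx (phi n) p)) =
    (fun n => integ Om (fun p => g0 p * pdx (phi n) p)).
  by apply: funext => n; rewrite (W0' (pdx (phi n)) (test_pdx (tphi n))) /= expr0 mul1r.
have aNQ := aP; rewrite ab in aNQ.
have aS := aP; rewrite ac in aS.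
have PQ := cvg_unique (@Rhausdorff R) aNQ (cvgN bQ).
have PS := cvg_unique (@Rhausdorff R) aS cS.
have QS : integ Om (fun p => g1 p * g0 p) = integ Om (fun p => g0 p * g1 p).
  by apply: eq_Rintegral => x _; rewrite mulrC.
have P0 : integ Om (fun p => psih p * g1 p) = 0.
  move: PQ PS; rewrite QS => PQ PS.
  have {}PQ := PQ ltac:(typeclasses eauto) ltac:(typeclasses eauto).
  have {}PS := PS ltac:(typeclasses eauto).
  lra.
have E := Eq psih Xpsi.
have N0 : integ Om (fun p => wlap Om psih p *
   (wdy Om psih p * wdx Om psih p - wdx Om psih p * wdy Om psih p)) = 0.
  have -> : (fun p => wlap Om psih p *
      (wdy Om psih p * wdx Om psih p - wdx Om psih p * wdy Om psih p)) = (fun=> 0).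
    by apply: funext => p; rewrite [X in X - _]mulrC subrr mulr0.
  by rewrite /integ Rintegral_cst // mul0r.
have B0 : integ Om (fun p => wdx Om psih p * psih p) = 0.
  by rewrite -P0; apply: eq_Rintegral => x _; rewrite mulrC.
set A := integ Om (fun p => wlap Om psih p ^+ 2).
have AA : integ Om (fun p => wlap Om psih p * wlap Om psih p) = A.
  by apply: eq_Rintegral => x _; rewrite expr2.
rewrite N0 B0 AA mulr0 addr0 subr0 in E.
have A0 : 0 <= A by apply: Rintegral_ge0 => x _; exact: sqr_ge0.
have F0 : psih = (fun=> 0) -> F psih = 0.
  move=> z; have := Flin (-1) psih psih Hpsi Hpsi.
  have -> : (fun p => -1 * psih p + psih p) = psih.
    by rewrite z; apply: funext => p; rewrite mulr0 addr0.
  by rewrite mulN1r addNr.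
rewrite /dualnorm; set Eset := (X in sup X).
have ubE : has_ubound Eset.
  exists `|C| => x [chi [Hchi _] <-].
  have [s0|spos] : semi2 Om chi = 0 \/ 0 < semi2 Om chi.
    by rewrite lt_def sqrtr_ge0 andbT; case: eqP; [left|right].
    by rewrite s0 invr0 mulr0.
  rewrite ler_pdivrMr //; apply: le_trans (FC _ Hchi) _.
  by apply: ler_wpM2r; [exact: ltW|exact: ler_norm].
have D0 : 0 <= sup Eset.
  have [[x Ex]|Ee] := pselect (Eset !=set0); last first.
    by move/set0P/negP/negPn/eqP: Ee => ->; rewrite sup0.
  apply: le_trans (ub_le_sup ubE Ex).
  by case: Ex => chi _ <-; rewrite divr_ge0 // sqrtr_ge0.
rewrite /semi2 -/A.
have [Az|Apos] : A = 0 \/ 0 < A by rewrite lt_def A0 andbT; case: eqP; [left|right].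
  rewrite Az sqrtr0; apply: mulr_ge0 => //; apply: mulr_ge0; first exact: ltW.
  by rewrite invr_ge0 ltW.
have psinz : psih <> (fun=> 0).
  move=> z; move: E; rewrite F0 // mulr0 => /eqP; rewrite mulf_eq0 invr_eq0 !gt_eqF //.
set s := Num.sqrt A.
have s0 : 0 < s by rewrite sqrtr_gt0.
have As : A = s * s by rewrite -expr2 sqr_sqrtr.
have inE : Eset (`|F psih| / s) by exists psih.
have le1 := ub_le_sup ubE inE.
have le2 : F psih <= sup Eset * s.
  by apply: le_trans (ler_norm _) _; rewrite -ler_pdivrMr.
have h : Re^-1 * s * s <= Ro^-1 * sup Eset * s.
  rewrite -mulrA -As E -mulrA; apply: ler_wpM2l => //; by rewrite invr_ge0 ltW.
rewrite ler_pM2r // in h.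
rewrite -mulrA; apply: (le_trans _ (ler_wpM2l (ltW Re0) h)).
by rewrite mulrA mulfV ?gt_eqF // mul1r.
Unshelve. all: by end_near.
Qed.
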